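(* Work in $\ell_1$ with sequences indexed by $\{0,1,2,\dots\}$ and standard basis $(e_k)$. Let $\xi$ be a random variable with $\Pr\{\xi=k\}=2^{-k}$ for $k=1,2,\dots$, and let $A\colon\Omega\to\mathcal{L}(\ell_1)$ be $Ax:=\xi\,x_\xi\, e_0$ (the operator $\xi|0\rangle\langle\xi|$, whose norm is unbounded in $\omega$). Let $\xi_1,\xi_2,\dots$ be i.i.d. copies of $\xi$ and $A_ix:=\xi_i x_{\xi_i}e_0$. Then for every $x\in\ell_1$, $T>0$, $\varepsilon>0$, $$\lim_{n\to\infty}\Pr\Big\{\sup_{t\in[0,T]}\big\|\big(e^{A_1t/n}\cdots e^{A_nt/n}-e^{t\,\mathbb{E}A}\big)x\big\|_{\ell_1}>\varepsilon\Big\}=0,$$ where $\mathbb{E}Ax=\big(\sum_{k\ge1}k2^{-k}x_k\big)e_0$.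
   Context: $(\Omega,\mathcal{F},\Pr)$ is a probability space; $e^{Bt}=\sum_k t^kB^k/k!$ for bounded $B$. *)

(* Defs.v *)
From HB Require Import structures.
From mathcomp Require Import all_boot all_order all_algebra.
From mathcomp Require Import all_classical all_reals all_analysis.
Set Implicit Arguments. Unset Strict Implicit. Unset Printing Implicit Defensive.
Import Order.TTheory GRing.Theory Num.Theory.
Import numFieldNormedType.Exports.
Local Open Scope classical_set_scope.
Local Open Scope ring_scope.

Definition l1norm {R : realType} (y : nat -> R) : \bar R :=
  (\sum_(0 <= k <oo) (`|y k|%:E))%E.

Definition in_l1 {R : realType} (y : nat -> R) : Prop := (l1norm y < +oo)%E.

(* e^{B t} x = sum_k t^k/k! B^k x.  For a bounded operator B the series converges
   in l_1, hence coordinatewise to the same limit; we take the coordinatewise limit. *)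
Definition expop {R : realType} (B : (nat -> R) -> (nat -> R)) (t : R)
  (x : nat -> R) : nat -> R :=
  fun j => limn (series (fun k => t ^+ k / (k`!)%:R * (iter k B x) j)).

Definition Aop {R : realType} (k : nat) (x : nat -> R) : nat -> R :=
  fun j => if j == 0%N then k%:R * x k else 0.

Definition EAop {R : realType} (x : nat -> R) : nat -> R :=
  fun j => if j == 0%N then
    limn (series (fun k => if k == 0%N then 0 else k%:R * (2^-1) ^+ k * x k))
  else 0.

(* e^{A_1 t/n} ... e^{A_n t/n} x  (with xi indexed 0..n-1; rightmost factor acts first) *)
Definition prodexp {R : realType} (a : nat -> nat) (n : nat) (s : R)
  (x : nat -> R) : nat -> R :=
  foldr (fun i y => expop (Aop (a i)) s y) x (iota 0 n).

Definition mutually_independent {d} {T : measurableType d} {R : realType}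
  (P : probability T R) (xi : nat -> T -> nat) : Prop :=
  forall (s : seq nat) (k : nat -> nat), uniq s ->
    P (\bigcap_(i in [set` s]) (xi i @^-1` [set k i])) =
    (\prod_(i <- s) P (xi i @^-1` [set k i]))%E.

(* Main.v *)
Require Import Defs.
From HB Require Import structures.
From mathcomp Require Import all_boot all_order all_algebra.
From mathcomp Require Import all_classical all_reals all_analysis.
Import Order.TTheory GRing.Theory Num.Theory.
Import numFieldNormedType.Exports.
Local Open Scope classical_set_scope.
Local Open Scope ring_scope.
From mathcomp Require Import ring lra measurable_realfun.
Set Implicit Arguments. Unset Strict Implicit. Unset Printing Implicit Defensive.
Section Det.
Variable R : realType.

Lemma lim_series2 (u : nat -> R) : (forall k, (2 <= k)%N -> u k = 0) ->
  limn (series u) = u 0%N + u 1%N.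
Proof.
move=> hu; apply: lim_near_cst => //; exists 2%N => // n /= hn.
rewrite /series /= (@big_cat_nat _ _ _ 2) //= !big_nat_recl //= big_geq //.
rewrite big_nat_cond big1 ?addr0 // => i /andP[/andP[h _] _]; exact: hu.
Qed.

Lemma expop_nil (B : (nat -> R) -> nat -> R) t y j :
  (forall z, B (B z) = fun _ => 0) -> expop B t y j = y j + t * B y j.
Proof.
move=> hB; rewrite /expop lim_series2; last first.
  by case=> [//|[//|k]] _ /=; rewrite hB mulr0.
by rewrite /= expr0 expr1 fact0 divr1 mul1r divr1.
Qed.

Lemma Aop_nil k : forall z : nat -> R, Aop k (Aop k z) = fun _ => 0.
Proof.
move=> z; apply: funext => j; rewrite /Aop; case: (j == 0%N) => //.
by case: k => [|k] /=; rewrite ?mul0r // mulr0.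
Qed.

Lemma EAop_nil : forall z : nat -> R, EAop (EAop z) = fun _ => 0.
Proof.
move=> z; apply: funext => j; rewrite /EAop; case: (j == 0%N) => //.
have -> : (fun k : nat => if k == 0%N then 0 else k%:R * (2^-1) ^+ k *
   (if k == 0%N then limn (series (fun k0 : nat => if k0 == 0%N then 0
     else k0%:R * (2^-1) ^+ k0 * z k0)) else 0)) = (fun _ => 0 : R).
  by apply: funext => k; case: (k == 0%N) => //; rewrite mulr0.
have -> : series (fun _ => 0 : R) = fun _ => 0.
  by apply: funext => n; rewrite /series /= big1.
exact: lim_cst.
Qed.

Definition fx (x : nat -> R) (k : nat) : R := k%:R * x k.

Lemma Aop_shift k (x : nat -> R) c :
  Aop k (fun j => x j + (if j == 0%N then c else 0)) = Aop k x.
Proof.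
apply: funext => j; rewrite /Aop; case: (j == 0%N) => //.
by case: k => [|k] /=; rewrite ?mul0r // addr0.
Qed.

Lemma foldr_prodexp (a : nat -> nat) (l : seq nat) (s : R) (x : nat -> R) :
  foldr (fun i y => expop (Aop (a i)) s y) x l =
  fun j => x j + (if j == 0%N then s * \sum_(i <- l) fx x (a i) else 0).
Proof.
elim: l => [|i l IH] /=.
  by apply: funext => j; rewrite big_nil mulr0; case: (j == 0%N); rewrite addr0.
apply: funext => j; rewrite expop_nil; last exact: Aop_nil.
rewrite IH Aop_shift /Aop big_cons /fx.
case: (j == 0%N); rewrite ?mulr0 ?addr0 // -addrA -mulrDr; congr (_ + _ * _); exact: addrC.
Qed.

End Det.
Section Det2.
Variable R : realType.

Definition muE (x : nat -> R) : R :=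
  limn (series (fun k => if k == 0%N then 0 else k%:R * (2^-1) ^+ k * x k)).

Lemma diff_eq (a : nat -> nat) n (x : nat -> R) t :
  (fun j => prodexp a n (t / n%:R) x j - expop EAop t x j) =
  fun j => if j == 0%N then t / n%:R * \sum_(i <- iota 0 n) fx x (a i) - t * muE x
           else 0.
Proof.
apply: funext => j; rewrite /prodexp foldr_prodexp expop_nil; last exact: EAop_nil.
rewrite /EAop /muE; case: (j == 0%N); rewrite ?mulr0 ?addr0 ?subrr //.
by rewrite opprD addrACA subrr add0r.
Qed.

Lemma l1norm_e0 (c : R) : l1norm (fun j => if j == 0%N then c else 0) = `|c|%:E.
Proof.
rewrite /l1norm (@nneseries_split _ _ 0 1) //= big_nat1 /= eseries0 ?adde0 //.
by move=> i; case: i => //= i _ _; rewrite normr0.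
Qed.

Lemma sup_eq (a : nat -> nat) n (x : nat -> R) (T : R) : (0 < n)%N -> 0 < T ->
  ereal_sup [set l1norm (fun j => prodexp a n (t / n%:R) x j - expop EAop t x j)
     | t in `[0%R, T]%classic] =
  (T * `|(\sum_(i <- iota 0 n) fx x (a i)) / n%:R - muE x|)%:E.
Proof.
move=> hn hT.
set S := \sum_(i <- iota 0 n) fx x (a i).
rewrite (@eq_imagel _ _ _ _ (fun t => (t * `|S / n%:R - muE x|)%:E)); last first.
  move=> t; rewrite /= in_itv /= => /andP[t0 tT].
  rewrite diff_eq l1norm_e0.
  have -> : t / n%:R * S - t * muE x = t * (S / n%:R - muE x) by ring.
  by rewrite normrM ger0_norm.
apply: le_anti; apply/andP; split.
  apply: ge_ereal_sup => _ [t /= + <-]; rewrite in_itv /= => /andP[t0 tT].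
  by rewrite lee_fin ler_wpM2r.
apply: le_ereal_sup_tmp; exists (T * `|S / n%:R - muE x|)%:E => //.
by exists T => //=; rewrite in_itv /= lexx (ltW hT).
Qed.

End Det2.
Section Decomp.
Local Open Scope ereal_scope.
Context d (T : measurableType d) (R : realType) (mu : {measure set T -> \bar R}).

Lemma eseries_single (F : nat -> \bar R) m : (forall k, 0 <= F k) ->
  (forall k, k != m -> F k = 0) -> \sum_(k <oo) F k = F m.
Proof.
move=> F0 Fm; rewrite (@nneseries_split _ _ 0 m.+1) //= eseries0 ?adde0; last first.
  by move=> i hi _; apply: Fm; rewrite neq_ltn hi orbT.
rewrite big_nat_recr //= big_nat_cond big1 ?add0e // => i /andP[/andP[_ hi] _].
by apply: Fm; rewrite neq_ltn hi.
Qed.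

Lemma decomp_integral (X : T -> nat) (mX : forall k, measurable (X @^-1` [set k]))
  (D : set T) (mD : measurable D) (h : nat -> T -> \bar R)
  (mh : forall k, measurable_fun [set: T] (h k)) (h0 : forall k w, 0 <= h k w) :
  \int[mu]_(w in D) h (X w) w =
  \sum_(k <oo) \int[mu]_(w in D `&` X @^-1` [set k]) h k w.
Proof.
transitivity (\int[mu]_(w in D) \sum_(k <oo) (h k \_ (X @^-1` [set k])) w).
  apply: eq_integral => w _; rewrite (@eseries_single _ (X w)).
  - by rewrite patchE mem_set.
  - by move=> k; rewrite patchE; case: ifP.
  - move=> k hk; rewrite patchE; case: ifPn => //; rewrite inE /= => e.
    by rewrite e eqxx in hk.
rewrite integral_nneseries //.
- by apply: eq_eseriesr => k _; rewrite integral_mkcondr.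
- move=> k; apply/(measurable_restrict _ _ mD).
    exact: mX.
  exact: measurable_funS (mh k).
- by move=> k w _; rewrite patchE; case: ifP.
Qed.

End Decomp.
Section Prob.
Context (R : realType) d (Omega : measurableType d) (P : probability Omega R)
  (xi : nat -> Omega -> nat)
  (xi_meas : forall i k, measurable (xi i @^-1` [set k]))
  (xi_law : forall i k, (0 < k)%N -> P (xi i @^-1` [set k]) = ((2^-1) ^+ k)%:E)
  (xi_indep : mutually_independent P xi).

Definition q (k : nat) : R := (2^-1) ^+ k.

Lemma meas_comp d' (U : measurableType d') i (g : nat -> U) :
  measurable_fun [set: Omega] (fun w => g (xi i w)).
Proof.
move=> _ Y mY; rewrite setTI.
have -> : (fun w => g (xi i w)) @^-1` Y =
    \bigcup_(k in [set k | Y (g k)]) xi i @^-1` [set k].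
  apply/seteqP; split => w /=; first by move=> h; exists (xi i w).
  by move=> [k /= h e]; rewrite e.
exact: (bigcup_measurable (fun k _ => xi_meas i k)).
Qed.

Lemma indep2 i j k l : i != j ->
  P (xi i @^-1` [set k] `&` xi j @^-1` [set l]) =
  (P (xi i @^-1` [set k]) * P (xi j @^-1` [set l]))%E.
Proof.
move=> ij; have ji : j != i by rewrite eq_sym.
have u : uniq [:: i; j] by rewrite /= inE ij.
have := @xi_indep [:: i; j] (fun m => if m == i then k else l) u.
rewrite !big_cons big_nil mule1 eqxx (negbTE ji) => <-.
congr (P _); apply/seteqP; split => w /=.
  move=> [hi hj] m; rewrite /= !inE => /orP[] /eqP ->; rewrite ?eqxx //.
  by rewrite (negbTE ji).
move=> h; split.
  by have := h i; rewrite /= !inE eqxx => /(_ isT).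
by have := h j; rewrite /= !inE eqxx orbT (negbTE ji) => /(_ isT).
Qed.

Lemma int_g i (g : nat -> R) (g0 : forall k, 0 <= g k) (gz : g 0%N = 0) :
  (\int[P]_w (g (xi i w))%:E = \sum_(k <oo) (g k * q k)%:E)%E.
Proof.
rewrite (@decomp_integral _ _ _ P (xi i) (xi_meas i) setT measurableT
   (fun k _ => (g k)%:E)) //.
- apply: eq_eseriesr => k _; rewrite integral_cst; last exact: measurableI.
  rewrite setTI; case: k => [|k]; first by rewrite gz mul0e mul0r.
  by rewrite EFinM; congr (_ * _)%E; exact: xi_law.
- by move=> k w; rewrite lee_fin.
Qed.

Lemma int_gg i j (ij : i != j) (g : nat -> R) (g0 : forall k, 0 <= g k)
  (gz : g 0%N = 0) :
  (\int[P]_w (g (xi i w) * g (xi j w))%:E =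
   \sum_(k <oo) ((g k * q k)%:E * \sum_(l <oo) (g l * q l)%:E))%E.
Proof.
rewrite (@decomp_integral _ _ _ P (xi i) (xi_meas i) setT measurableT
   (fun k w => (g k * g (xi j w))%:E)) //; last 2 first.
- by move=> k; exact: (meas_comp j (fun l => (g k * g l)%:E)).
- by move=> k w; rewrite lee_fin mulr_ge0.
apply: eq_eseriesr => k _; rewrite setTI.
rewrite (@decomp_integral _ _ _ P (xi j) (xi_meas j) _ (xi_meas i k)
   (fun l _ => (g k * g l)%:E)) //; last first.
  by move=> l w; rewrite lee_fin mulr_ge0.
rewrite -nneseriesZl; last by move=> l _; rewrite lee_fin mulr_ge0 // exprn_ge0.
apply: eq_eseriesr => l _; rewrite integral_cst; last exact: measurableI.
case: k => [|k]; first by rewrite gz !mul0r !mul0e.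
case: l => [|l]; first by rewrite gz !mulr0 mul0r mul0e mule0.
transitivity ((g k.+1 * g l.+1)%:E * ((q k.+1) * (q l.+1))%:E)%E.
  congr (_ * _)%E; rewrite EFinM /q -(xi_law i (ltn0Sn k)) -(xi_law j (ltn0Sn l)); exact: indep2.
by rewrite -!EFinM; congr EFin; ring.
Qed.

Section WL.
Context (g : nat -> R) (g0 : forall k, 0 <= g k) (gz : g 0%N = 0)
  (hG : (\sum_(k <oo) (g k * q k)%:E < +oo)%E)
  (hG2 : (\sum_(k <oo) (g k ^+ 2 * q k)%:E < +oo)%E).

Definition Y i : Omega -> R := fun w => g (xi i w).

Lemma Y_L2 i : Y i \in Lfun P 2%:E.
Proof.
rewrite inE; apply/andP; split; first by rewrite inE; exact: meas_comp.
rewrite inE /= /finite_norm unlock /=; apply: poweR_lty.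
rewrite (eq_integral (fun w => (g (xi i w) ^+ 2)%:E)); last first.
  by move=> w _; rewrite /Y powR_mulrn // real_normK // num_real.
rewrite (int_g i (g := fun k => g k ^+ 2)) //.
- by move=> k; exact: sqr_ge0.
- by rewrite gz expr0n.
Qed.

Lemma Y_L1 i : Y i \in Lfun P 1.
Proof. exact: (Lfun_subset12 (fin_num_measure P _ measurableT) (Y_L2 i)). Qed.

Let m := fine (\sum_(k <oo) (g k * q k)%:E)%E.
Let m2 := fine (\sum_(k <oo) (g k ^+ 2 * q k)%:E)%E.

Lemma Gfin : (\sum_(k <oo) (g k * q k)%:E)%E = m%:E.
Proof.
rewrite fineK // ge0_fin_numE // nneseries_ge0 // => k _ _.
by rewrite lee_fin mulr_ge0 // exprn_ge0.
Qed.

Lemma G2fin : (\sum_(k <oo) (g k ^+ 2 * q k)%:E)%E = m2%:E.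
Proof.
rewrite fineK // ge0_fin_numE // nneseries_ge0 // => k _ _.
by rewrite lee_fin mulr_ge0 ?sqr_ge0 // exprn_ge0.
Qed.

Lemma EY i : ('E_P[Y i] = m%:E)%E.
Proof. by rewrite unlock int_g // Gfin. Qed.

Lemma EY2 i : ('E_P[Y i ^+ 2] = m2%:E)%E.
Proof.
rewrite unlock (eq_integral (fun w => (g (xi i w) ^+ 2)%:E)) //.
rewrite (int_g i (g := fun k => g k ^+ 2)) ?G2fin //.
- by move=> k; exact: sqr_ge0.
- by rewrite gz expr0n.
Qed.

Lemma EYY i j : i != j -> ('E_P[Y i * Y j] = (m * m)%:E)%E.
Proof.
move=> ij; rewrite unlock (eq_integral (fun w => (g (xi i w) * g (xi j w))%:E)) //.
rewrite int_gg //.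
under eq_eseriesr do rewrite Gfin muleC.
by rewrite nneseriesZl ?Gfin -?EFinM // => k _; rewrite lee_fin mulr_ge0 // exprn_ge0.
Qed.

Lemma covY i j : i != j -> covariance P (Y i) (Y j) = 0%E.
Proof.
move=> ij; rewrite covarianceE ?Y_L1 //; last exact: Lfun2_mul_Lfun1 (Y_L2 i) (Y_L2 j).
by rewrite EYY // !EY -EFinM -EFinB subrr.
Qed.

Definition v := m2 - m ^+ 2.

Lemma VY i : ('V_P[Y i] = v%:E)%E.
Proof. by rewrite varianceE ?Y_L2 // EY2 EY -EFin_expe -EFinB. Qed.

Definition Sm n : Omega -> R := fun w => \sum_(i < n) Y i w.

Lemma Sm0 : Sm 0 = cst 0.
Proof. by apply: funext => w; rewrite /Sm big_ord0. Qed.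

Lemma Sm_S n : Sm n.+1 = (Sm n \+ Y n)%R.
Proof. by apply: funext => w; rewrite /Sm big_ord_recr. Qed.

Lemma Sm_L2 n : Sm n \in Lfun P 2%:E.
Proof.
elim: n => [|n IH]; first by rewrite Sm0; exact: Lfun_cst.
rewrite Sm_S; apply: rpredD => //; first by rewrite lee_fin ler1n.
move=> ?; exact: Y_L2.
Qed.

Lemma Sm_L1 n : Sm n \in Lfun P 1.
Proof. exact: (Lfun_subset12 (fin_num_measure P _ measurableT) (Sm_L2 n)). Qed.

Lemma ESm n : ('E_P[Sm n] = (n%:R * m)%:E)%E.
Proof.
elim: n => [|n IH]; first by rewrite Sm0 expectation_cst mul0r.
rewrite Sm_S expectationD ?Sm_L1 ?Y_L1 // IH EY -EFinD; congr EFin.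
by rewrite mulrSr mulrDl mul1r.
Qed.

Lemma covSm n k : (n <= k)%N -> covariance P (Sm n) (Y k) = 0%E.
Proof.
elim: n => [|n IH] hn; first by rewrite Sm0 covariance_cst_l.
rewrite Sm_S covarianceDl ?Sm_L2 ?Y_L2 // IH ?covY ?adde0 //; last exact: ltnW.
by rewrite neq_ltn hn.
Qed.

Lemma VSm n : ('V_P[Sm n] = (n%:R * v)%:E)%E.
Proof.
elim: n => [|n IH]; first by rewrite Sm0 variance_cst mul0r.
rewrite Sm_S varianceD ?Sm_L2 ?Y_L2 // IH VY covSm // mule0 adde0 -EFinD.
by congr EFin; rewrite mulrSr mulrDl mul1r.
Qed.

Definition Sn n : Omega -> R := (n%:R^-1 \o* Sm n)%R.

Lemma Sn_L1 n : Sn n \in Lfun P 1.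
Proof. by apply: Lfun_scale => //; exact: Sm_L1. Qed.

Lemma cheb_Sn n (eps : R) : (0 < n)%N -> 0 < eps ->
  (P [set w | (eps <= `| Sn n w - m |)%R] <= (eps ^- 2 * (v / n%:R))%:E)%E.
Proof.
move=> hn he.
have L2 : Sn n \in Lfun P 2%:E.
  by apply: Lfun_scale; [rewrite ler1n | exact: Sm_L2].
have mS : Sn n \in mfun := sub_Lfun_mfun L2.
have := @chebyshev _ _ _ P (mfun_Sub mS) eps he.
rewrite /= {1 2}/Sn expectationZl ?Sm_L1 // ESm varianceZ ?Sm_L2 // VSm.
rewrite -!EFinM /=.
have nz : n%:R != 0 :> R by rewrite pnatr_eq0 -lt0n.
have -> : n%:R^-1 * (n%:R * m) = m by field.
have -> : n%:R^-1 ^+ 2 * (n%:R * v) = v / n%:R by field.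
by move=> h; exact: h.
Qed.

End WL.
End Prob.
From mathcomp Require Import zify.
Section Bounds.
Variable R : realType.

Lemma sq_le k : (k * k <= 2 * 2 ^ k)%N.
Proof.
elim: k => [//|k IH]; rewrite expnS.
case: k IH => [//|[//|[//|k]]] IH //.
nia.
Qed.

Lemma q_eq k : q R k = (2 ^+ k)^-1.
Proof. by rewrite /q exprVn. Qed.

Lemma kq_le1 k : k%:R * q R k <= 1.
Proof.
rewrite q_eq ler_pdivrMr ?exprn_gt0 // mul1r -natrX ler_nat.
exact: ltnW (ltn_expl _ _).
Qed.

Lemma k2q_le2 k : k%:R ^+ 2 * q R k <= 2.
Proof.
rewrite q_eq ler_pdivrMr ?exprn_gt0 // -natrX -natrX -natrM ler_nat.
by rewrite expnS expn1; apply: leq_trans (sq_le k) _.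
Qed.

Lemma lim_series_EFin (a : nat -> R) : (forall k, 0 <= a k) ->
  (\sum_(k <oo) (a k)%:E < +oo)%E ->
  (limn (series a))%:E = (\sum_(k <oo) (a k)%:E)%E.
Proof.
move=> a0 ha; rewrite -EFin_lim; last exact: nnseries_is_cvg.
by congr (limn _); apply: funext => n; rewrite /series /= sumEFin.
Qed.

Lemma q_ge0 k : 0 <= q R k.
Proof. by rewrite /q exprn_ge0. Qed.

Lemma xk_le (x : nat -> R) (hx : in_l1 x) k : `|x k| <= fine (l1norm x).
Proof.
have l0 : (0 <= l1norm x)%E by apply: nneseries_ge0.
rewrite -lee_fin fineK ?ge0_fin_numE //.
apply: le_trans (nneseries_lim_ge k.+1 _); last by [].
rewrite big_nat_recr //= leeDr // sume_ge0 //.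
Qed.

Lemma summ (x : nat -> R) (hx : in_l1 x) (g : nat -> R) (g0 : forall k, 0 <= g k)
  (gle : forall k, g k <= `|fx x k|) :
  (\sum_(k <oo) (g k * q R k)%:E < +oo)%E /\
  (\sum_(k <oo) (g k ^+ 2 * q R k)%:E < +oo)%E.
Proof.
have fk k : `|fx x k| = k%:R * `|x k| by rewrite /fx normrM normr_nat.
have hx' : (\sum_(k <oo) `|x k|%:E < +oo)%E by exact: hx.
split.
  apply: le_lt_trans hx'; apply: lee_nneseries => [k _ _|k _].
    by rewrite lee_fin mulr_ge0 // q_ge0.
  rewrite lee_fin; apply: le_trans (ler_wpM2r (q_ge0 k) (gle k)) _.
  rewrite fk mulrAC mulrC; apply: ler_piMr => //; exact: kq_le1.
set B := fine (l1norm x).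
have B0 : 0 <= B by apply: le_trans (xk_le hx 0%N).
have H : (\sum_(k <oo) (g k ^+ 2 * q R k)%:E <=
    \sum_(k <oo) ((2 * B)%:E * `|x k|%:E))%E.
  apply: lee_nneseries => [k _ _|k _].
    by rewrite lee_fin mulr_ge0 ?sqr_ge0 // q_ge0.
  rewrite -EFinM lee_fin.
  have h1 : g k ^+ 2 <= (k%:R * `|x k|) ^+ 2.
    by rewrite -fk expr2 expr2 ler_pM.
  apply: le_trans (ler_wpM2r (q_ge0 k) h1) _.
  rewrite exprMn mulrAC.
  apply: (@le_trans _ _ (2 * `|x k| ^+ 2)).
    by rewrite mulrC [X in _ <= X]mulrC; apply: (ler_wpM2l (sqr_ge0 _)); exact: k2q_le2.
  by rewrite expr2 mulrA; apply: ler_wpM2r => //; apply: ler_wpM2l => //; exact: xk_le.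
apply: le_lt_trans H _.
rewrite nneseriesZl; last by move=> k _; rewrite lee_fin.
apply: lte_mul_pinfty => //; rewrite lee_fin mulr_ge0 //.
Qed.

End Bounds.
Lemma meas_le (R : realType) d (Omega : measurableType d) (P : probability Omega R)
  (F : Omega -> R) (hF : F \in Lfun P 1) (a : R) :
  measurable [set w | a <= F w] /\ measurable [set w | a < F w].
Proof.
have mF : measurable_fun setT F by have := sub_Lfun_mfun hF; rewrite inE.
split.
  have := mF measurableT _ (measurable_itv `[a, +oo[); rewrite setTI.
  congr measurable; apply/seteqP; split => w /=; rewrite in_itv /= andbT //.
have := mF measurableT _ (measurable_itv `]a, +oo[); rewrite setTI.
congr measurable; apply/seteqP; split => w /=; rewrite in_itv /= andbT //.
Qed.
Theorem mainTheorem9 (R : realType) (d : measure_display) (Omega : measurableType d)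
  (P : probability Omega R) (xi : nat -> Omega -> nat)
  (xi_meas : forall i k, measurable (xi i @^-1` [set k]))
  (xi_law : forall i k, (0 < k)%N -> P (xi i @^-1` [set k]) = ((2^-1) ^+ k)%:E)
  (xi_indep : mutually_independent P xi)
  (x : nat -> R) (hx : in_l1 x) (T eps : R) (hT : 0 < T) (heps : 0 < eps) :
  (fun n : nat => P [set w | (eps%:E <
     ereal_sup [set l1norm (fun j => (prodexp (fun i => xi i w) n (t / n%:R) x j
                                     - expop EAop t x j)%R) | t in `[0%R, T]%classic])%E])
    @ \oo --> 0%E.
Proof.
pose f := fx x.
pose gp := fun k => (f k + `|f k|) / 2.
pose gm := fun k => (`|f k| - f k) / 2.
have f0 : f 0%N = 0 by rewrite /f /fx mul0r.
have nf k : f k <= `|f k| by exact: ler_norm.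
have nf' k : - f k <= `|f k| by rewrite -normrN; exact: ler_norm.
have gp0 k : 0 <= gp k by have := nf' k; rewrite /gp; lra.
have gm0 k : 0 <= gm k by have := nf k; rewrite /gm; lra.
have gpz : gp 0%N = 0 by rewrite /gp f0 normr0 addr0 mul0r.
have gmz : gm 0%N = 0 by rewrite /gm f0 normr0 subr0 mul0r.
have gple k : gp k <= `|f k| by have := nf k; rewrite /gp; lra.
have gmle k : gm k <= `|f k| by have := nf' k; rewrite /gm; lra.
have gpm k : gp k - gm k = f k by rewrite /gp /gm; field.
have [Gp Gp2] := summ hx gp0 gple.
have [Gm Gm2] := summ hx gm0 gmle.
set mp := fine (\sum_(k <oo) (gp k * q R k)%:E)%E.
set mm := fine (\sum_(k <oo) (gm k * q R k)%:E)%E.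
have limE (a : nat -> R) : (forall k, 0 <= a k) -> (\sum_(k <oo) (a k)%:E < +oo)%E ->
    limn (series a) = fine (\sum_(k <oo) (a k)%:E)%E.
  by move=> a0 ha; rewrite -lim_series_EFin.
have muE_eq : muE x = mp - mm.
  rewrite /muE.
  have -> : (fun k => if k == 0%N then 0 else k%:R * (2^-1) ^+ k * x k) =
      (fun k => gp k * q R k) - (fun k => gm k * q R k).
    apply: funext => k; transitivity (gp k * q R k - gm k * q R k); last by [].
    rewrite -mulrBl gpm /f /fx /q.
    by case: k => [|k] /=; rewrite ?mul0r // mulrAC.
  rewrite lim_seriesB; first by rewrite !limE // => k; rewrite mulr_ge0 ?q_ge0.
  - by apply: nnseries_is_cvg => // k; rewrite mulr_ge0 ?q_ge0.
  - by apply: nnseries_is_cvg => // k; rewrite mulr_ge0 ?q_ge0.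
have key n w : (\sum_(i <- iota 0 n) fx x (xi i w)) / n%:R - muE x =
    (Sn xi gp n w - mp) - (Sn xi gm n w - mm).
  have -> : \sum_(i <- iota 0 n) fx x (xi i w) =
      \sum_(i < n) gp (xi i w) - \sum_(i < n) gm (xi i w).
    rewrite -sumrB -(big_mkord xpredT (fun i => gp (xi i w) - gm (xi i w))).
    rewrite /index_iota subn0; apply: eq_bigr => i _; exact/esym/gpm.
  by rewrite muE_eq /Sn /Sm /Y /=; ring.
pose d2 := eps / (2 * T).
have d2p : 0 < d2 by rewrite /d2 divr_gt0 // mulr_gt0.
have d2e : d2 * (2 * T) = eps by rewrite /d2 mulrAC -mulrA mulfV ?mulr1 // gt_eqF // mulr_gt0.
have bnd n : (0 < n)%N -> (P [set w | (eps%:E <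
     ereal_sup [set l1norm (fun j => (prodexp (fun i => xi i w) n (t / n%:R) x j
                                     - expop EAop t x j)%R) | t in `[0%R, T]%classic])%E]
   <= (d2 ^- 2 * (v gp / n%:R) + d2 ^- 2 * (v gm / n%:R))%:E)%E.
  move=> hn.
  have hA := cheb_Sn xi_meas xi_law xi_indep gp0 gpz Gp Gp2 hn d2p.
  have hB := cheb_Sn xi_meas xi_law xi_indep gm0 gmz Gm Gm2 hn d2p.
  rewrite -/mp in hA; rewrite -/mm in hB.
  set A := [set w | _] in hA; set B := [set w | _] in hB.
  have LA : (Num.Def.normr \o (Sn xi gp n \- cst mp)) \in Lfun P 1.
    by apply: Lfun_norm; apply: rpredB; [exact: Sn_L1 | exact: Lfun_cst].
  have LB : (Num.Def.normr \o (Sn xi gm n \- cst mm)) \in Lfun P 1.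
    by apply: Lfun_norm; apply: rpredB; [exact: Sn_L1 | exact: Lfun_cst].
  have mA : measurable A by exact: (meas_le LA d2).1.
  have mB : measurable B by exact: (meas_le LB d2).1.
  pose Fe := fun w => T * `|(Sn xi gp n w - mp) - (Sn xi gm n w - mm)|.
  have LE : Fe \in Lfun P 1.
    have -> : Fe = T \o* (Num.Def.normr \o ((Sn xi gp n \- cst mp) \- (Sn xi gm n \- cst mm))).
      by apply: funext => w /=; rewrite /Fe; ring.
    apply: Lfun_scale => //; apply: Lfun_norm.
    by apply: rpredB; apply: rpredB; (exact: Sn_L1 || exact: Lfun_cst).
  have -> : [set w | (eps%:E < ereal_sup [set l1norm (fun j =>
      (prodexp (fun i => xi i w) n (t / n%:R) x j - expop EAop t x j)%R)
      | t in `[0%R, T]%classic])%E] = [set w | eps < Fe w].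
    by apply/seteqP; split => w /=; rewrite sup_eq // lte_fin key.
  have mE : measurable [set w | eps < Fe w] by exact: (meas_le LE eps).2.
  have sub : [set w | eps < Fe w] `<=` A `|` B.
    move=> w /= h; rewrite /A /B /=.
    case: (lerP d2 `|Sn xi gp n w - mp|) => ha; first by left.
    case: (lerP d2 `|Sn xi gm n w - mm|) => hb; first by right.
    exfalso; move: h; rewrite /Fe.
    have := ler_normB (Sn xi gp n w - mp) (Sn xi gm n w - mm).
    set a := `|_ - _ - _|; move: a => a ha2 h.
    nra.
  apply: le_trans (le_measure P (mem_set mE) (mem_set (measurableU _ _ mA mB)) sub) _.
  apply: le_trans (measureU2 _ mA mB) _.
  by rewrite EFinD; apply: leeD.
pose K := d2 ^- 2 * (v gp + v gm).
apply: (@squeeze_cvge _ _ _ _ (cst 0%E) _ (fun n => (`|K| * 2 * harmonic n)%:E)).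
- exists 1%N => // n /= hn; apply/andP; split; first exact: measure_ge0.
  apply: le_trans (bnd n hn) _; rewrite lee_fin.
  have n0 : (0 < n%:R :> R) by rewrite ltr0n.
  have -> : d2 ^- 2 * (v gp / n%:R) + d2 ^- 2 * (v gm / n%:R) = K / n%:R.
    by rewrite /K; field; rewrite !gt_eqF.
  have h1 : K / n%:R <= `|K| / n%:R.
    by rewrite ler_wpM2r ?invr_ge0 ?ler_norm // ltW.
  apply: le_trans h1 _.
  have hn' : (1 <= n%:R :> R) by rewrite ler1n.
  have a0 : 0 <= `|K| by [].
  have -> : n.+1%:R = n%:R + 1 :> R by rewrite natr1.
  move: (n%:R) hn' a0 n0 => b hb a0 b0.
  rewrite ler_pdivrMr // mulrAC ler_pdivlMr; last by lra.
  nra.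
- exact: cvg_cst.
- apply: cvg_EFin; first by apply: nearW.
  rewrite -(mulr0 (`|K| * 2)); exact: cvgMl_tmp cvg_harmonic.
Qed.
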